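(* For every $\kappa,\lambda\in(0,1)$, the measure rule LB-NxM$(\kappa,\lambda)$ is $\zeta$-slick for $\zeta=1/(\kappa n)$: for all neighboring samples $S,S'\in(\mathcal{X}\times\{\pm1\})^n$ and every finite sequence of hypotheses $H=(h_1,\dots,h_t)$ with $h_j:\mathcal X\to[-1,1]$, letting $\hat\mu$ and $\hat\mu'$ be the distributions output by LB-NxM on $(S,H)$ and $(S',H)$, we have $\Delta(\hat\mu,\hat\mu')\le\frac{1}{\kappa n}$.
   Context: Neighboring samples differ in at most one position. $\Delta(Y,Z)=\max_A|\Pr[Y\in A]-\Pr[Z\in A]|$ is statistical distance. Measures on $[n]$: $\mu:[n]\to[0,1]$, $|\mu|=\sum_i\mu(i)$, $d(\mu)=|\mu|/n$, $\hat\mu=\mu/|\mu|$, $\mathrm{KL}(\mu_1\|\mu_2)=\sum_i\mu_1(i)\log(\mu_1(i)/\mu_2(i))+\mu_2(i)-\mu_1(i)$, $\Gamma_\kappa=\{\mu:d(\mu)\ge\kappa\}$, $\Pi_{\Gamma_\kappa}\tilde\mu=\arg\min_{\mu\in\Gamma_\kappa}\mathrm{KL}(\mu\|\tilde\mu)$. LB-NxM$(\kappa,\lambda)$ on $S=((x_i,y_i))_{i=1}^n$ and $h_1,\dots,h_t$: $\ell_j(i)=1-\frac12|h_j(x_i)-y_i|$, $\tilde\mu(i)=\kappa e^{-\lambda\sum_{j=1}^t\ell_j(i)}$, $\mu=\Pi_{\Gamma_\kappa}\tilde\mu$, output $\hat\mu$. *)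

(* Defs.v *)
From HB Require Import structures.
From mathcomp Require Import all_boot all_order all_algebra.
From mathcomp Require Import all_classical all_reals.
From mathcomp Require Import sequences exp.
Set Implicit Arguments. Unset Strict Implicit. Unset Printing Implicit Defensive.
Import Order.TTheory GRing.Theory Num.Theory.
Local Open Scope ring_scope.

Section LBNxM.
Variables (R : realType) (n : nat).

Definition is_measure (mu : 'I_n -> R) : Prop := forall i, 0 <= mu i <= 1.

Definition mass (mu : 'I_n -> R) : R := \sum_(i < n) mu i.
Definition density (mu : 'I_n -> R) : R := mass mu / n%:R.
Definition normalize (mu : 'I_n -> R) : 'I_n -> R := fun i => mu i / mass mu.

(* KL(mu1 || mu2) = sum_i mu1 i log(mu1 i / mu2 i) + mu2 i - mu1 i
   (with the convention 0 log 0 = 0, which holds since ln 0 = 0 here). *)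
Definition KL (mu1 mu2 : 'I_n -> R) : R :=
  \sum_(i < n) (mu1 i * ln (mu1 i / mu2 i) + mu2 i - mu1 i).

Definition Gamma (kappa : R) (mu : 'I_n -> R) : Prop :=
  is_measure mu /\ kappa <= density mu.

Definition is_KL_projection (kappa : R) (mut mu : 'I_n -> R) : Prop :=
  Gamma kappa mu /\ forall nu, Gamma kappa nu -> KL mu mut <= KL nu mut.

Variable X : Type.

Definition loss (h : X -> R) (z : X * R) : R := 1 - `|h z.1 - z.2| / 2.

Definition mutilde (kappa lambda : R) (S : 'I_n -> X * R) (H : seq (X -> R))
  : 'I_n -> R :=
  fun i => kappa * expR (- (lambda * \sum_(h <- H) loss h (S i))).

Definition LB_NxM_output (kappa lambda : R) (S : 'I_n -> X * R)
  (H : seq (X -> R)) (muhat : 'I_n -> R) : Prop :=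
  exists mu, is_KL_projection kappa (mutilde kappa lambda S H) mu /\
             muhat = normalize mu.

Definition is_sample (S : 'I_n -> X * R) : Prop :=
  forall i, (S i).2 = 1 \/ (S i).2 = -1.

Definition neighboring (S S' : 'I_n -> X * R) : Prop :=
  exists k : 'I_n, forall i, i != k -> S i = S' i.

Definition is_hypothesis (h : X -> R) : Prop := forall x, -1 <= h x <= 1.

End LBNxM.

Definition stat_dist (R : realType) (n : nat) (p q : 'I_n -> R) : R :=
  \big[Num.max/0]_(A : {set 'I_n}) `|\sum_(i in A) p i - \sum_(i in A) q i|.

(* Main.v *)
Require Import Defs.
From HB Require Import structures.
From mathcomp Require Import all_boot all_order all_algebra.
From mathcomp Require Import all_classical all_reals.
From mathcomp Require Import sequences exp.
From mathcomp Require Import topology normedtype.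
From mathcomp Require Import ring lra.
Import Order.TTheory GRing.Theory Num.Theory numFieldNormedType.Exports.
Local Open Scope ring_scope.

Module Helpers.
Set Implicit Arguments. Unset Strict Implicit.


Section Aux.
Variable R : realType.

Lemma ln_strict (z : R) : 0 < z -> z != 1 -> ln z < z - 1.
Proof.
move=> z0 z1.
have h := @expR_gt1Dx R (ln z).
rewrite lnK ?posrE // in h.
have : ln z != 0 by rewrite ln_eq0.
move=> /h; lra.
Qed.

Lemma ln_le (z : R) : 0 < z -> ln z <= z - 1.
Proof.
move=> z0; have [->|z1] := eqVneq z 1; first by rewrite ln1; lra.
exact/ltW/ln_strict.
Qed.

Definition gterm (nu x a : R) := nu * ln (nu / a) - nu * ln (x / a) - nu + x.

Lemma gterm_ge0 nu x a : 0 <= nu -> 0 < x -> 0 < a -> 0 <= gterm nu x a.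
Proof.
move=> nu0 x0 a0; rewrite /gterm.
have [->|nup] := eqVneq nu 0; first by rewrite !mul0r; lra.
have nupos : 0 < nu by rewrite lt_def nup.
rewrite !ln_div ?posrE //.
have h := @ln_le (x / nu) (divr_gt0 x0 nupos).
rewrite ln_div ?posrE // in h.
have : nu * (ln x - ln nu) <= nu * (x / nu - 1) by rewrite ler_wpM2l // ltW.
have e : nu * (x / nu - 1) = x - nu by rewrite mulrBr mulr1 mulrCA divff ?mulr1 // lt0r_neq0.
rewrite e.
move=> hh. 
have -> : nu * (ln nu - ln a) - nu * (ln x - ln a) - nu + x = x - nu - nu * (ln x - ln nu) by ring.
lra.
Qed.

Lemma gterm_eq0 nu x a : 0 <= nu -> 0 < x -> 0 < a -> gterm nu x a = 0 -> nu = x.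
Proof.
move=> nu0 x0 a0; rewrite /gterm.
have [->|nup] := eqVneq nu 0; first by rewrite !mul0r; lra.
have nupos : 0 < nu by rewrite lt_def nup.
have [//|nx] := eqVneq nu x.
rewrite !ln_div ?posrE //.
have xn1 : x / nu != 1.
  apply/negP => /eqP h; move: nx; have -> : nu = nu * (x / nu) by rewrite h mulr1.
  by rewrite mulrCA divff ?mulr1 ?eqxx // lt0r_neq0.
have h := @ln_strict (x / nu) (divr_gt0 x0 nupos) xn1.
rewrite ln_div ?posrE // in h.
have : nu * (ln x - ln nu) < nu * (x / nu - 1) by rewrite ltr_pM2l.
have e : nu * (x / nu - 1) = x - nu by rewrite mulrBr mulr1 mulrCA divff ?mulr1 // lt0r_neq0.
rewrite e.
move=> hh. 
have -> : nu * (ln nu - ln a) - nu * (ln x - ln a) - nu + x = x - nu - nu * (ln x - ln nu) by ring.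
lra.
Qed.

End Aux.


Section Proj.
Variables (R : realType) (n : nat).

Definition cap (c : R) (a : 'I_n -> R) : 'I_n -> R := fun i => Num.min 1 (c * a i).

Lemma KL_decomp (nu x a : 'I_n -> R) : KL nu a - KL x a =
  \sum_i gterm (nu i) (x i) (a i) + \sum_i (nu i - x i) * ln (x i / a i).
Proof.
rewrite /KL -sumrB -big_split; apply eq_bigr => i _; rewrite /gterm /=; ring.
Qed.

Lemma cap_gt0 c a i : 0 < c -> 0 < a i -> 0 < cap c a i.
Proof. by move=> c0 a0; rewrite /cap lt_min ltr01 mulr_gt0. Qed.

Lemma lin_ge c (a : 'I_n -> R) nu i : 1 <= c -> 0 < a i -> nu <= 1 ->
  (nu - cap c a i) * ln c <= (nu - cap c a i) * ln (cap c a i / a i).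
Proof.
move=> c1 a0 nu1; rewrite /cap /=.
have c0 : 0 < c by lra.
case: (leP (c * a i) 1) => h.
  by rewrite mulfK // lt0r_neq0.
rewrite div1r.
have : ln (a i)^-1 <= ln c.
  rewrite ler_ln ?posrE ?invr_gt0 //.
  by rewrite -(ler_pM2r a0) mulVf ?lt0r_neq0 // ltW.
move=> hl; nra.
Qed.

Lemma mass_ge kappa (nu : 'I_n -> R) : (0 < n)%N -> kappa <= density nu ->
  kappa * n%:R <= mass nu.
Proof. by move=> n0; rewrite /density ler_pdivlMr // ltr0n. Qed.

Lemma proj_eq kappa c (a mu : 'I_n -> R) : (0 < n)%N -> 1 <= c ->
  (forall i, 0 < a i) ->
  Gamma kappa (cap c a) -> (c = 1 \/ mass (cap c a) = kappa * n%:R) ->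
  is_KL_projection kappa a mu -> forall i, mu i = cap c a i.
Proof.
move=> n0 c1 a0 Gx hc [[mum mud] hmin].
have c0 : 0 < c by lra.
have hle := hmin _ Gx.
have dec := KL_decomp mu (cap c a) a.
have lin : 0 <= \sum_i (mu i - cap c a i) * ln (cap c a i / a i).
  apply: le_trans (_ : \sum_i (mu i - cap c a i) * ln c <= _); last first.
    apply: ler_sum => i _; apply: lin_ge => //; by case/andP: (mum i).
  rewrite -mulr_suml sumrB.
  case: hc => [->|hm]; first by rewrite ln1 mulr0.
  rewrite -[\sum_i cap c a i]/(mass (cap c a)) hm -[\sum_i mu i]/(mass mu).
  apply: mulr_ge0; first by rewrite subr_ge0; exact: mass_ge.
  exact: ln_ge0.
have gs : \sum_i gterm (mu i) (cap c a i) (a i) = 0.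
  apply/eqP; rewrite eq_le; apply/andP; split; first lra.
  apply: sumr_ge0 => i _; apply: gterm_ge0 => //; last exact: cap_gt0.
  by case/andP: (mum i).
move=> i; apply: (gterm_eq0 (a := a i)) => //; first by case/andP: (mum i).
  exact: cap_gt0.
apply: (psumr_eq0P _ gs) => // j _; apply: gterm_ge0 => //; last exact: cap_gt0.
by case/andP: (mum j).
Qed.

End Proj.


Section Exists.
Variables (R : realType) (n : nat).

Lemma cap_measure c (a : 'I_n -> R) : 0 < c -> (forall i, 0 < a i) -> is_measure (cap c a).
Proof.
move=> c0 a0 i; apply/andP; split; first exact/ltW/cap_gt0.
by rewrite /cap ge_min lexx.
Qed.

Lemma F_cont (a : 'I_n -> R) (s : seq 'I_n) :
  continuous (fun c : R => \sum_(i <- s) Num.min 1 (c * a i)).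
Proof.
elim: s => [|j s IH].
  have -> : (fun c : R => \sum_(i <- [::]) Num.min 1 (c * a i)) = fun=> 0.
    by apply: funext => c; rewrite big_nil.
  exact: cst_continuous.
have -> : (fun c : R => \sum_(i <- j :: s) Num.min 1 (c * a i)) =
  (fun c : R => Num.min 1 (c * a j)) + (fun c : R => \sum_(i <- s) Num.min 1 (c * a i)).
  by apply: funext => c; rewrite big_cons.
move=> x; apply: continuousD; last exact: IH.
apply: (@continuous_min _ _ (fun=> 1) (fun c : R => c * a j)).
  exact: cst_continuous.
apply: (@continuousM _ _ (fun c : R => c) (fun=> a j)).
  by move=> y; exact: cvg_id.
exact: cst_continuous.
Qed.


Lemma exists_c kappa (a : 'I_n -> R) : (0 < n)%N -> 0 < kappa -> kappa <= 1 ->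
  (forall i, 0 < a i) -> exists c, 1 <= c /\ Gamma kappa (cap c a) /\
  (c = 1 \/ mass (cap c a) = kappa * n%:R).
Proof.
move=> n0 k0 k1 a0.
have Gam c : 0 < c -> kappa * n%:R <= mass (cap c a) -> Gamma kappa (cap c a).
  move=> c0 hm; split; first exact: cap_measure.
  by rewrite /density ler_pdivlMr // ltr0n.
case: (leP (kappa * n%:R) (mass (cap 1 a))) => h.
  by exists 1; split => //; split; [apply: Gam|left].
pose C := 1 + \sum_i (a i)^-1.
have hC i : 1 <= C * a i.
  have : (a i)^-1 <= C.
    rewrite /C (bigD1 i) //=.
    have : 0 <= \sum_(j | j != i) (a j)^-1 by apply: sumr_ge0 => j _; rewrite invr_ge0 ltW.
    lra.
  by move=> h1; have := ler_wpM2r (ltW (a0 i)) h1; rewrite mulVf ?lt0r_neq0.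
have C1 : 1 <= C.
  have : 0 <= \sum_i (a i)^-1 by apply: sumr_ge0 => j _; rewrite invr_ge0 ltW.
  rewrite /C; lra.
have FC : mass (cap C a) = n%:R.
  rewrite /mass (eq_bigr (fun _ => 1)) ?sumr_const ?card_ord //.
  by move=> i _; rewrite /cap /= (min_l (hC i)).
have cont : {within `[1, C], continuous (fun c => mass (cap c a))}%classic.
  apply: continuous_subspaceT.
  exact: (F_cont (a:=a) (s:=index_enum 'I_n)).
have kn : kappa * n%:R <= n%:R.
  rewrite -[X in _ <= X]mul1r ler_wpM2r // ler0n.
have hb : mass (cap 1 a) <= mass (cap C a) by rewrite FC; lra.
have [c cin Fc] := IVT C1 cont (v := kappa * n%:R)
  (ltac:(rewrite (min_l hb) (max_r hb) FC; apply/andP; split; [exact: ltW|exact: kn])).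
move: cin; rewrite in_itv /= => /andP[c1 cC].
exists c; split => //; split; last by right.
apply: Gam; [lra|by rewrite Fc].
Qed.

End Exists.


Section TV.
Variables (R : realType) (n : nat).

Lemma sd_le (p q : 'I_n -> R) (δ : R) : 0 <= δ ->
  (forall A : {set 'I_n}, `|\sum_(i in A) p i - \sum_(i in A) q i| <= δ) ->
  stat_dist p q <= δ.
Proof. by move=> d0 h; rewrite /stat_dist; apply: bigmax_le. Qed.

Lemma tv_half (p q : 'I_n -> R) k (δ : R) :
  (forall i, 0 <= p i) -> (forall i, 0 <= q i) ->
  \sum_i p i = 1 -> \sum_i q i = 1 ->
  (forall i, i != k -> q i <= p i) -> q k <= δ ->
  forall A : {set 'I_n}, `|\sum_(i in A) p i - \sum_(i in A) q i| <= δ.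
Proof.
move=> p0 q0 sp sq hpq hk A.
pose d i := q i - p i.
pose e i := if i == k then q k else 0.
have de i : d i <= e i.
  rewrite /d /e; case: eqVneq => [->|ne]; first by have := p0 k; lra.
  by have := hpq i ne; lra.
have e0 i : 0 <= e i by rewrite /e; case: eqP.
have se : \sum_i e i = q k.
  rewrite (bigD1 k) //= /e eqxx big1 ?addr0 // => i /negbTE ->; done.
have sub (P : pred 'I_n) : \sum_(i | P i) d i <= q k.
  apply: le_trans (ler_sum _ (fun i _ => de i)) _.
  rewrite -se [X in _ <= X](bigID P) /=.
  have : 0 <= \sum_(i | ~~ P i) e i by apply: sumr_ge0.
  lra.
have sd : \sum_i d i = 0 by rewrite /d sumrB sp sq subrr.
have eA : \sum_(i in A) p i - \sum_(i in A) q i = - \sum_(i in A) d i.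
  by rewrite /d sumrB opprB.
rewrite eA ler_norml.
have h1 := sub (fun i => i \in A).
have h2 := sub (fun i => i \notin A).
move: sd; rewrite (bigID (fun i => i \in A)) /= => sd.
apply/andP; split; lra.
Qed.

Lemma norm_props kappa (mu : 'I_n -> R) : 0 < kappa * n%:R ->
  is_measure mu -> kappa * n%:R <= mass mu ->
  [/\ forall i, 0 <= normalize mu i, \sum_i normalize mu i = 1 &
      forall i, normalize mu i <= 1 / (kappa * n%:R)].
Proof.
move=> kn0 hm hM.
have M0 : 0 < mass mu := lt_le_trans kn0 hM.
split.
- move=> i; rewrite /normalize; apply: divr_ge0; [by case/andP: (hm i)|exact: ltW].
- by rewrite /normalize -mulr_suml divff // lt0r_neq0.
- move=> i; rewrite /normalize.
  apply: le_trans (_ : 1 / mass mu <= _).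
    apply: ler_wpM2r; [by rewrite invr_ge0 ltW|by case/andP: (hm i)].
  by rewrite !div1r lef_pV2 ?posrE.
Qed.

Lemma dom c c' (a a' : 'I_n -> R) k : 0 < c' -> c' <= c -> (forall i, 0 < a i) ->
  (forall i, 0 < a' i) ->
  (forall i, i != k -> a i = a' i) ->
  0 < mass (cap c a) -> mass (cap c a) <= mass (cap c' a') ->
  forall i, i != k -> normalize (cap c' a') i <= normalize (cap c a) i.
Proof.
move=> c0 cc a0 a'0 eqa M0 MM i ik.
have h : cap c' a' i <= cap c a i.
  rewrite /cap /= -(eqa i ik) le_min ge_min lexx /=.
  by rewrite ge_min ler_wpM2r ?orbT // ltW.
have h0 : 0 <= cap c' a' i.
  exact/ltW/cap_gt0.
rewrite /normalize.
apply: le_trans (_ : cap c' a' i / mass (cap c a) <= _).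
  rewrite ler_wpM2l // lef_pV2 ?posrE //; exact: lt_le_trans M0 MM.
by rewrite ler_wpM2r // invr_ge0 ltW.
Qed.


Lemma tv_final kappa c c' (a a' : 'I_n -> R) k : (0 < n)%N -> 0 < kappa ->
  1 <= c -> 1 <= c' -> (forall i, 0 < a i) -> (forall i, 0 < a' i) ->
  (forall i, i != k -> a i = a' i) ->
  Gamma kappa (cap c a) -> Gamma kappa (cap c' a') ->
  (c = 1 \/ mass (cap c a) = kappa * n%:R) ->
  (c' = 1 \/ mass (cap c' a') = kappa * n%:R) ->
  stat_dist (normalize (cap c a)) (normalize (cap c' a')) <= 1 / (kappa * n%:R).
Proof.
move=> n0 k0 c1 c'1 a0 a'0 eqa [hm hd] [hm' hd'] hc hc'.
have kn0 : 0 < kappa * n%:R by rewrite mulr_gt0 // ltr0n.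
have hM := mass_ge n0 hd.
have hM' := mass_ge n0 hd'.
have [p0 sp pb] := norm_props kn0 hm hM.
have [q0 sq qb] := norm_props kn0 hm' hM'.
have eqa' : forall i, i != k -> a' i = a i by move=> i /eqa ->.
have d0 : 0 <= 1 / (kappa * n%:R) by rewrite divr_ge0 // ltW.
have M0 : 0 < mass (cap c a) := lt_le_trans kn0 hM.
have M'0 : 0 < mass (cap c' a') := lt_le_trans kn0 hM'.
have [L|Rt] : (forall i, i != k -> normalize (cap c' a') i <= normalize (cap c a) i) \/
              (forall i, i != k -> normalize (cap c a) i <= normalize (cap c' a') i).
  case: (leP c' c) => cc.
    case: (leP (mass (cap c a)) (mass (cap c' a'))) => MM.
      by left; apply: dom => //; lra.
    right; apply: dom => //; try lra.
  right; apply: dom => //; lra.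
- by apply: sd_le => // A; exact: (tv_half p0 q0 sp sq L (qb k)).
- by apply: sd_le => // A; rewrite distrC; exact: (tv_half q0 p0 sq sp Rt (pb k)).
Qed.

End TV.

End Helpers.
Import Helpers.


Theorem mainTheorem4 (R : realType) (X : Type) (n : nat) (kappa lambda : R)
  (hn : (0 < n)%N)
  (hk0 : 0 < kappa) (hk1 : kappa < 1) (hl0 : 0 < lambda) (hl1 : lambda < 1)
  (S S' : 'I_n -> X * R) (H : seq (X -> R))
  (hS : is_sample S) (hS' : is_sample S') (hSS' : neighboring S S')
  (hH : forall h, h \in H -> is_hypothesis h)
  (muhat muhat' : 'I_n -> R) :
  LB_NxM_output kappa lambda S H muhat ->
  LB_NxM_output kappa lambda S' H muhat' ->
  stat_dist muhat muhat' <= 1 / (kappa * n%:R).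
Proof.
move=> [mu [hp ->]] [mu' [hp' ->]].
set a := mutilde kappa lambda S H in hp.
set a' := mutilde kappa lambda S' H in hp'.
have a0 : forall i, 0 < a i by move=> i; rewrite /a /mutilde mulr_gt0 // expR_gt0.
have a'0 : forall i, 0 < a' i by move=> i; rewrite /a' /mutilde mulr_gt0 // expR_gt0.
have [k hk] := hSS'.
have eqa : forall i, i != k -> a i = a' i by move=> i /hk; rewrite /a /a' /mutilde => ->.
have [c [c1 [Gc hc]]] := exists_c hn hk0 (ltW hk1) a0.
have [c' [c'1 [Gc' hc']]] := exists_c hn hk0 (ltW hk1) a'0.
have -> : mu = cap c a by apply: funext; exact: (proj_eq hn c1 a0 Gc hc hp).
have -> : mu' = cap c' a' by apply: funext; exact: (proj_eq hn c'1 a'0 Gc' hc' hp').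
exact: (tv_final hn hk0 c1 c'1 a0 a'0 eqa Gc Gc' hc hc').
Qed.
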